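(* Let $\alpha,\beta,\gamma_1,\gamma_2\in\widehat{\mathbb{F}_q^\times}$ with $\varepsilon\notin\{\alpha,\overline{\beta}\gamma_1\gamma_2\}$. Then for every $x\in\mathbb{F}_q$ and $y\in\mathbb{F}_q^\times$, $$F_4\!\left({\alpha;\beta\atop\gamma_1,\gamma_2};x,y\right)=\frac{g(\overline{\alpha}\beta)g(\alpha\overline{\gamma_2})}{g(\beta)g(\overline{\gamma_2})}\,\overline{\alpha}(y)\,F_4\!\left({\alpha;\alpha\overline{\gamma_2}\atop\gamma_1,\alpha\overline{\beta}};\frac{x}{y},\frac{1}{y}\right).$$
   Context: $\mathbb{F}_q$ is a finite field with $q$ elements. $\widehat{\mathbb{F}_q^\times}$ is the group of multiplicative characters $\mathbb{F}_q^\times\to\overline{\mathbb{Q}}^\times$, $\varepsilon$ the trivial character; every character (including $\varepsilon$) is extended by $0$ at $0$; $\overline{\eta}=\eta^{-1}$; $\delta(\eta)=1$ if $\eta=\varepsilon$, else $0$. $\psi$ is a fixed non-trivial additive character. $g(\eta)=-\sum_{x\in\mathbb{F}_q^\times}\psi(x)\eta(x)$, $g^\circ(\eta)=q^{\delta(\eta)}g(\eta)$, $(\alpha)_\nu=g(\alpha\nu)/g(\alpha)$, $(\alpha)^\circ_\nu=g^\circ(\alpha\nu)/g^\circ(\alpha)$. For $x,y\in\mathbb{F}_q$, $F_4\!\left({\alpha;\beta\atop\gamma_1,\gamma_2};x,y\right)=\frac{1}{(1-q)^2}\sum_{\nu_1,\nu_2\in\widehat{\mathbb{F}_q^\times}}\frac{(\alpha)_{\nu_1\nu_2}(\beta)_{\nu_1\nu_2}}{(\gamma_1)^\circ_{\nu_1}(\gamma_2)^\circ_{\nu_2}(\varepsilon)^\circ_{\nu_1}(\varepsilon)^\circ_{\nu_2}}\nu_1(x)\nu_2(y)$.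 *)

(* Defs.v *)
From HB Require Import structures.
From mathcomp Require Import all_boot all_order all_algebra all_field.
From mathcomp Require Import boolp classical_sets fsbigop.
Set Implicit Arguments. Unset Strict Implicit. Unset Printing Implicit Defensive.
Import Order.TTheory GRing.Theory Num.Theory.
Local Open Scope ring_scope.
Local Open Scope classical_set_scope.

Section FiniteFieldHypergeometric.
Variable F : finFieldType.

Definition chr := {ffun F -> algC}.

(* A multiplicative character F_q^x -> Qbar^x, extended by 0 at 0. *)
Definition is_mchar (eta : chr) : Prop :=
  eta 0 = 0 /\ eta 1 = 1 /\ forall x y : F, eta (x * y) = eta x * eta y.

Definition mchars : set chr := [set eta | is_mchar eta].

Definition is_nontriv_addchar (psi : F -> algC) : Prop :=
  (forall x y : F, psi (x + y) = psi x * psi y) /\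
  (forall x : F, psi x != 0) /\ (exists x : F, psi x != 1).

(* trivial character, extended by 0 at 0 *)
Definition ch_eps : chr := [ffun x : F => (x != 0)%:R].
Definition ch_mul (a b : chr) : chr := [ffun x => a x * b x].
(* conjugate (= inverse) character; 0^-1 = 0 in MathComp *)
Definition ch_inv (a : chr) : chr := [ffun x => (a x)^-1].

Definition q : algC := (#|F|)%:R.

Definition ch_delta (eta : chr) : nat := (eta == ch_eps).

Variable psi : F -> algC.

Definition gauss (eta : chr) : algC := - \sum_(x : F | x != 0) psi x * eta x.
Definition gauss0 (eta : chr) : algC := q ^+ ch_delta eta * gauss eta.
Definition poch (a nu : chr) : algC := gauss (ch_mul a nu) / gauss a.
Definition poch0 (a nu : chr) : algC := gauss0 (ch_mul a nu) / gauss0 a.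

Definition F4 (a b c1 c2 : chr) (x y : F) : algC :=
  (1 - q) ^- 2 *
  \sum_(n1 \in mchars) \sum_(n2 \in mchars)
     (poch a (ch_mul n1 n2) * poch b (ch_mul n1 n2)
      / (poch0 c1 n1 * poch0 c2 n2 * poch0 ch_eps n1 * poch0 ch_eps n2)
      * n1 x * n2 y).

End FiniteFieldHypergeometric.

(* Main.v *)
Require Import Defs.
From HB Require Import structures.
From mathcomp Require Import all_boot all_order all_algebra all_field.
From mathcomp Require Import boolp classical_sets fsbigop.
From mathcomp Require Import ring.
Import GRing.Theory Num.Theory.
Set Implicit Arguments. Unset Strict Implicit. Unset Printing Implicit Defensive.
Local Open Scope ring_scope.

Section Helpers.
Variable F : finFieldType.
Implicit Types (a b l : chr F).

Lemma mchar_ne0 l x : is_mchar l -> x != 0 -> l x != 0.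
Proof.
move=> [H0 [H1 HM]] Hx; apply/eqP => E.
have : l (x * x^-1) = 1 by rewrite mulfV.
by rewrite HM E mul0r => /eqP; rewrite eq_sym oner_eq0.
Qed.

Lemma mchar_inv l x : is_mchar l -> l x^-1 = (l x)^-1.
Proof.
move=> Hl; have [->|Hx] := eqVneq x 0.
  by case: Hl => H0 _; rewrite invr0 H0 invr0.
have Hlx := mchar_ne0 Hl Hx.
case: Hl => H0 [H1 HM].
apply: (mulfI Hlx); rewrite -HM mulfV // mulfV //.
Qed.

Lemma mchar_mul l x y : is_mchar l -> l (x * y) = l x * l y.
Proof. by case=> _ []. Qed.

Lemma is_mchar_mul a b : is_mchar a -> is_mchar b -> is_mchar (ch_mul a b).
Proof.
move=> [a0 [a1 aM]] [b0 [b1 bM]]; rewrite /ch_mul; split; first by rewrite ffunE a0 mul0r.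
split; first by rewrite ffunE a1 b1 mulr1.
by move=> x y; rewrite !ffunE aM bM mulrACA.
Qed.

Lemma is_mchar_inv a : is_mchar a -> is_mchar (ch_inv a).
Proof.
move=> Ha; have [a0 [a1 aM]] := Ha; rewrite /ch_inv; split; first by rewrite ffunE a0 invr0.
split; first by rewrite ffunE a1 invr1.
by move=> x y; rewrite !ffunE aM invfM.
Qed.

Lemma is_mchar_eps : is_mchar (ch_eps F).
Proof.
rewrite /ch_eps; split; first by rewrite ffunE eqxx.
split; first by rewrite ffunE oner_eq0.
move=> x y; rewrite !ffunE mulf_eq0 negb_or.
by case: (x != 0); case: (y != 0); rewrite /= ?mulr0 ?mul0r ?mulr1.
Qed.

Lemma ch_eq a b : a 0 = 0 -> b 0 = 0 -> (forall x, x != 0 -> a x = b x) -> a = b.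
Proof.
move=> a0 b0 H; apply/ffunP => x; have [->|Hx] := eqVneq x 0; first by rewrite a0 b0.
exact: H.
Qed.

Lemma ch_inv_inv a : ch_inv (ch_inv a) = a.
Proof. by apply/ffunP => x; rewrite !ffunE invrK. Qed.

Lemma ch_inv_eps : ch_inv (ch_eps F) = ch_eps F.
Proof. by apply/ffunP => x; rewrite !ffunE; case: (x != 0); rewrite ?invr1 ?invr0. Qed.

Lemma ch_mul_eps l : is_mchar l -> ch_mul (ch_eps F) l = l.
Proof.
move=> [l0 _]; apply/ffunP => x; rewrite !ffunE.
by have [->|Hx] := eqVneq x 0; rewrite ?l0 ?mulr0 ?mul1r.
Qed.

Lemma q_ne0 : q F != 0.
Proof.
rewrite /q pnatr_eq0 -lt0n; apply/card_gt0P; by exists 0.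
Qed.

Lemma sum_char l : is_mchar l -> l != ch_eps F -> \sum_(x : F | x != 0) l x = 0.
Proof.
move=> Hl Hne.
have [x0 Hx0] : exists x, l x != ch_eps F x.
  apply: contrapT => H; move/eqP: Hne; apply; apply/ffunP => x.
  by apply/eqP; apply: contrapT => Hx; apply: H; exists x; apply/negP.
have Hx0n : x0 != 0 by apply: contraNneq Hx0 => ->; rewrite ffunE eqxx; case: Hl => ->.
move: Hx0; rewrite ffunE Hx0n => Hx0.
have E : \sum_(x : F | x != 0) l x = \sum_(x : F) l x.
  by rewrite [RHS](bigD1 0) //=; case: Hl => ->; rewrite add0r.
rewrite E.
have : \sum_(x : F) l x = l x0 * \sum_(x : F) l x.
  rewrite mulr_sumr (reindex_inj (mulfI Hx0n)) /=.
  by apply: eq_bigr => x _; rewrite mchar_mul.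
move/eqP; rewrite -subr_eq0 -{1}[\sum_x l x]mul1r -mulrBl mulf_eq0 subr_eq0 eq_sym.
by rewrite (negbTE Hx0) => /eqP.
Qed.


End Helpers.

Section Gauss.
Variable F : finFieldType.
Variable psi : F -> algC.
Hypothesis Hpsi : is_nontriv_addchar psi.
Implicit Types (a b l : chr F).

Lemma psi0 : psi 0 = 1.
Proof.
case: Hpsi => HA [HN _]; have := HA 0 0; rewrite addr0 => E.
apply: (mulfI (HN 0)); by rewrite mulr1 -E.
Qed.

Lemma sum_psi : \sum_(x : F) psi x = 0.
Proof.
case: Hpsi => HA [HN [x1 Hx1]].
have : \sum_(x : F) psi x = psi x1 * \sum_(x : F) psi x.
  rewrite mulr_sumr (reindex_inj (addrI x1)) /=.
  by apply: eq_bigr => x _; rewrite HA.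
move/eqP; rewrite -subr_eq0 -{1}[\sum_x psi x]mul1r -mulrBl mulf_eq0 subr_eq0 eq_sym.
by rewrite (negbTE Hx1) => /eqP.
Qed.

Lemma sum_psi_mul (s : F) :
  \sum_(x : F | x != 0) psi (s * x) = if s == 0 then q F - 1 else -1.
Proof.
have E : \sum_(x : F | x != 0) psi (s * x) = \sum_(x : F) psi (s * x) - 1.
  by rewrite [\sum_x _](bigD1 0) //= mulr0 psi0 addrC addrK.
rewrite E; have [->|Hs] := eqVneq s 0.
  by congr (_ - _); rewrite (eq_bigr (fun _ => 1)) ?sumr_const ?card_ord // => x _; rewrite mul0r psi0.
by have := sum_psi; rewrite (reindex_inj (mulfI Hs)) /= => ->; rewrite sub0r.
Qed.

Lemma gauss_eps : gauss psi (ch_eps F) = 1.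
Proof.
rewrite /gauss (eq_bigr (fun x => psi (1 * x))); last first.
  by move=> x Hx; rewrite ffunE Hx mulr1 mul1r.
by rewrite sum_psi_mul oner_eq0 opprK.
Qed.

Lemma gauss0_eps : gauss0 psi (ch_eps F) = q F.
Proof. by rewrite /gauss0 /ch_delta eqxx gauss_eps mulr1 expr1. Qed.

Lemma gauss_pair l : is_mchar l ->
  gauss psi l * gauss0 psi (ch_inv l) = (l (-1))^-1 * q F.
Proof.
move=> Hl; have [->|Hne] := eqVneq l (ch_eps F).
  by rewrite ch_inv_eps gauss_eps gauss0_eps ffunE oppr_eq0 oner_eq0 invr1 !mul1r.
have Hine : ch_inv l != ch_eps F.
  by apply: contra Hne => /eqP E; rewrite -[l]ch_inv_inv E ch_inv_eps.
have Hil := is_mchar_inv Hl.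
rewrite /gauss0 /ch_delta (negbTE Hine) expr0 mul1r /gauss mulrNN.
rewrite mulr_suml.
rewrite (eq_bigr (fun x => \sum_(t : F | t != 0) psi ((1 + t) * x) * (l t)^-1)); last first.
  move=> x Hx; rewrite mulr_sumr (reindex_inj (mulfI Hx)) /=.
  apply: eq_big => [t|t Ht]; first by rewrite mulf_eq0 negb_or Hx.
  case: Hpsi => HA _.
  rewrite ffunE mchar_mul // invfM mulrDl mul1r [t * x]mulrC HA.
  have Hlx := mchar_ne0 Hl Hx.
  have Ht' : t != 0 by move: Ht; rewrite mulf_eq0 negb_or => /andP[].
  have Hlt := mchar_ne0 Hl Ht'.
  by field; rewrite ?Hlx ?Hlt.
rewrite exchange_big /=.
rewrite (eq_bigr (fun t => - (ch_inv l) t + (ch_inv l) t * (if t == -1 then q F else 0))); last first.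
  move=> t Ht; rewrite -mulr_suml sum_psi_mul ffunE.
  have -> : (1 + t == 0) = (t == -1) by rewrite addrC addr_eq0.
  by case: (t == -1); ring.
rewrite big_split /= sumrN sum_char // oppr0 add0r.
rewrite (bigD1 (-1)) /=; last by rewrite oppr_eq0 oner_eq0.
rewrite big1 ?addr0 ?eqxx ?ffunE //.
by move=> t /andP [_ /negbTE ->]; rewrite mulr0.
Qed.

Lemma gauss0_eq l : is_mchar l ->
  gauss0 psi l = l (-1) * q F / gauss psi (ch_inv l).
Proof.
move=> Hl; have := gauss_pair (is_mchar_inv Hl); rewrite ch_inv_inv ffunE invrK => E.
have Hq := q_ne0 F.
have Hg : gauss psi (ch_inv l) != 0.
  apply/eqP => H0; move: E; rewrite H0 mul0r => /esym/eqP; rewrite mulf_eq0 (negbTE Hq) orbF.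
  by rewrite (negbTE (mchar_ne0 Hl _)) // oppr_eq0 oner_eq0.
by rewrite -E; field.
Qed.

Lemma gauss0_inv_eq l : is_mchar l ->
  gauss0 psi (ch_inv l) = (l (-1))^-1 * q F / gauss psi l.
Proof.
move=> Hl; rewrite (gauss0_eq (is_mchar_inv Hl)) ch_inv_inv ffunE //.
Qed.

Lemma gauss_ne0 l : is_mchar l -> gauss psi l != 0.
Proof.
move=> Hl; have := gauss_pair Hl => E.
apply/eqP => H0; move: E; rewrite H0 mul0r => /esym/eqP; rewrite mulf_eq0 (negbTE (q_ne0 F)) orbF.
by rewrite invr_eq0 (negbTE (mchar_ne0 Hl _)) // oppr_eq0 oner_eq0.
Qed.

Lemma gauss0_ne0 l : is_mchar l -> gauss0 psi l != 0.
Proof.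
move=> Hl; rewrite (gauss0_eq Hl).
have H1 := gauss_ne0 (is_mchar_inv Hl).
have H2 : l (-1) != 0 by rewrite (mchar_ne0 Hl) // oppr_eq0 oner_eq0.
by rewrite !mulf_neq0 ?invr_eq0 ?q_ne0.
Qed.

End Gauss.


Lemma sign_cases (F : finFieldType) (l : chr F) : is_mchar l -> l (-1) = 1 \/ l (-1) = -1.
Proof.
move=> Hl; have : l (-1) * l (-1) = 1 by rewrite -mchar_mul // mulrNN mulr1; case: Hl => _ [].
move/eqP; rewrite -subr_eq0.
have -> : l (-1) * l (-1) - 1 = (l (-1) - 1) * (l (-1) + 1) by ring.
rewrite mulf_eq0 subr_eq0 addr_eq0 => /orP [/eqP -> | /eqP ->]; by [left | right].
Qed.

Ltac mch := repeat (first [ assumption | apply: is_mchar_mul | apply: is_mchar_inv | apply: is_mchar_eps ]).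

Lemma mchar0 (F : finFieldType) (l : chr F) : is_mchar l -> l 0 = 0.
Proof. by case. Qed.

Ltac nzv := match goal with H : is_mchar _ |- _ =>
  apply: (mchar_ne0 H); first [ assumption | by rewrite oppr_eq0 oner_eq0 ] end.

Ltac zer := rewrite ?ffunE; repeat match goal with H : is_mchar _ |- _ => progress rewrite ?(mchar0 H) end;
    rewrite ?mul0r ?mulr0 ?invr0 ?mul0r ?mulr0 //.

Ltac chsolve := apply: ch_eq; rewrite /ch_mul /ch_inv ?/ch_eps;
  [ zer | zer
  | let z := fresh "z" in let Hz := fresh "Hz" in move=> z Hz; rewrite !ffunE ?Hz /=; field; repeat (apply/andP; split); try nzv ].

Theorem proposition3p17 (F : finFieldType) (psi : F -> algC)
  (Hpsi : is_nontriv_addchar psi)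
  (a b c1 c2 : chr F)
  (Ha : is_mchar a) (Hb : is_mchar b) (Hc1 : is_mchar c1) (Hc2 : is_mchar c2)
  (Hane : a != ch_eps F)
  (Hbcc : ch_mul (ch_mul (ch_inv b) c1) c2 != ch_eps F)
  (x y : F) (Hy : y != 0) :
  F4 psi a b c1 c2 x y =
  gauss psi (ch_mul (ch_inv a) b) * gauss psi (ch_mul a (ch_inv c2))
    / (gauss psi b * gauss psi (ch_inv c2))
  * ch_inv a y
  * F4 psi a (ch_mul a (ch_inv c2)) c1 (ch_mul a (ch_inv b)) (x / y) (1 / y).
Proof.
rewrite /F4 [RHS]mulrCA; congr (_ * _).
rewrite mulr_fsumr; apply: eq_fsbigr => n1; rewrite in_setE => Hn1; have {}Hn1 : is_mchar n1 := Hn1.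
rewrite mulr_fsumr.
pose h := fun n2 => ch_mul (ch_mul (ch_inv a) (ch_inv n1)) (ch_inv n2).
have hM n2 : is_mchar n2 -> is_mchar (h n2) by move=> ?; rewrite /h; mch.
have hh n2 : is_mchar n2 -> h (h n2) = n2 by move=> Hn2; rewrite /h; chsolve.
rewrite [RHS](reindex_fsbig h (@mchars F) (@mchars F)); last first.
  split.
  - by move=> m Hm; apply: hM.
  - by move=> m m' Hm Hm' E; rewrite -(hh m) ?E ?hh //; move: Hm Hm'; rewrite !in_setE.
  - by move=> m Hm; exists (h m); [apply: hM | apply: hh].
apply: eq_fsbigr => n2; rewrite in_setE => Hn2; have {}Hn2 : is_mchar n2 := Hn2.
rewrite /poch /poch0 /h.
set H := ch_mul (ch_mul (ch_inv a) (ch_inv n1)) (ch_inv n2).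
have HH : is_mchar H by rewrite /H; mch.
have E1 : ch_mul a (ch_mul n1 H) = ch_inv n2 by rewrite /H; chsolve.
have E2 : ch_mul (ch_mul a (ch_inv c2)) (ch_mul n1 H) = ch_inv (ch_mul c2 n2) by rewrite /H; chsolve.
have E3 : ch_mul (ch_mul a (ch_inv b)) H = ch_inv (ch_mul b (ch_mul n1 n2)) by rewrite /H; chsolve.
have E4 : ch_mul (ch_eps F) H = ch_inv (ch_mul a (ch_mul n1 n2)) by rewrite /H; chsolve.
have E6 : ch_inv (ch_mul a (ch_inv b)) = ch_mul (ch_inv a) b by chsolve.
rewrite E1 E2 E3 E4 !ch_mul_eps // !gauss0_eps //.
rewrite (gauss0_eq Hpsi (is_mchar_mul Hc2 Hn2)) (gauss0_eq Hpsi Hc2) (gauss0_eq Hpsi Hn2).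
rewrite (gauss0_eq Hpsi (is_mchar_mul Ha (is_mchar_inv Hb))) E6.
rewrite (gauss0_inv_eq Hpsi (is_mchar_mul Hb (is_mchar_mul Hn1 Hn2))).
rewrite (gauss0_inv_eq Hpsi (is_mchar_mul Ha (is_mchar_mul Hn1 Hn2))).
rewrite /H !ffunE div1r (mchar_mul x y^-1 Hn1) (mchar_inv y Ha) (mchar_inv y Hn1) (mchar_inv y Hn2) !invrK.
have Hq := q_ne0 F.
have Ky : a y != 0 by nzv.
have K1 : n1 y != 0 by nzv.
have K2 : n2 y != 0 by nzv.
have Kc : c2 (-1) != 0 by nzv.
have Kb : b (-1) != 0 by nzv.
have G1 : gauss0 psi (ch_mul c1 n1) != 0 by apply: (gauss0_ne0 Hpsi); mch.
have G2 : gauss0 psi c1 != 0 by apply: (gauss0_ne0 Hpsi); mch.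
have G3 : gauss0 psi n1 != 0 by apply: (gauss0_ne0 Hpsi); mch.
have G4 : gauss psi (ch_inv (ch_mul c2 n2)) != 0 by apply: (gauss_ne0 Hpsi); mch.
have G5 : gauss psi (ch_inv c2) != 0 by apply: (gauss_ne0 Hpsi); mch.
have G6 : gauss psi (ch_inv n2) != 0 by apply: (gauss_ne0 Hpsi); mch.
have G7 : gauss psi (ch_mul b (ch_mul n1 n2)) != 0 by apply: (gauss_ne0 Hpsi); mch.
have G8 : gauss psi (ch_mul a (ch_mul n1 n2)) != 0 by apply: (gauss_ne0 Hpsi); mch.
have G9 : gauss psi (ch_mul (ch_inv a) b) != 0 by apply: (gauss_ne0 Hpsi); mch.
have G10 : gauss psi (ch_mul a (ch_inv c2)) != 0 by apply: (gauss_ne0 Hpsi); mch.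
have G11 : gauss psi a != 0 by apply: (gauss_ne0 Hpsi); mch.
have G12 : gauss psi b != 0 by apply: (gauss_ne0 Hpsi); mch.
have [-> | ->] := sign_cases Ha; have [-> | ->] := sign_cases Hn1;
  have [-> | ->] := sign_cases Hn2; field;
  rewrite ?Hq ?Ky ?K1 ?K2 ?Kc ?Kb ?G1 ?G2 ?G3 ?G4 ?G5 ?G6 ?G7 ?G8 ?G9 ?G10 ?G11 ?G12 ?oppr_eq0 ?oner_eq0 //.
Qed.
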